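(* Let $\mathbb{K}\in\{\mathbb{R},\mathbb{C}\}$, let $X$ be a linear space over $\mathbb{K}$, let $\phi\colon X\times X\to\mathbb{K}$ be biadditive, and let $Z_0=\{z\in X:\phi(z,z)\neq0\}$ be nonempty. Suppose there is a function $f\colon X\to\mathbb{K}$ with $f(x+y)=f(x)f(y)-\phi(x,y)$ for all $x,y\in X$. Then there is an additive functional $F\colon X\to\mathbb{K}$ with $Z_0=X\setminus\ker F$, and $\phi(x,y)\neq 0$ for all $x,y\in Z_0$.
   Context: A map $\phi\colon X\times X\to\mathbb{K}$ is biadditive if it is additive in each variable separately (no homogeneity assumed); $\ker F=\{x\in X:F(x)=0\}$. *)

(* Defs.v *)
From HB Require Import structures.
From mathcomp Require Import all_boot all_order all_algebra.
From mathcomp Require Import reals.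
From mathcomp.real_closed Require Import complex.
Set Implicit Arguments. Unset Strict Implicit. Unset Printing Implicit Defensive.
Import GRing.Theory.
Local Open Scope ring_scope.

Definition biadditive (K : fieldType) (X : lmodType K) (phi : X -> X -> K) : Prop :=
  (forall x y z, phi (x + y) z = phi x z + phi y z) /\
  (forall x y z, phi x (y + z) = phi x y + phi x z).

Definition additive_fun (K : fieldType) (X : lmodType K) (F : X -> K) : Prop :=
  forall x y, F (x + y) = F x + F y.

Definition thm11_over (K : fieldType) : Prop :=
  forall (X : lmodType K) (phi : X -> X -> K) (f : X -> K),
    biadditive phi ->
    (exists z : X, phi z z != 0) ->
    (forall x y : X, f (x + y) = f x * f y - phi x y) ->
    exists F : X -> K,
      additive_fun F /\
      (forall z : X, phi z z != 0 <-> F z != 0) /\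
      (forall x y : X, phi x x != 0 -> phi y y != 0 -> phi x y != 0).

(* Main.v *)
Require Import Defs.
From HB Require Import structures.
From mathcomp Require Import all_boot all_order all_algebra.
From mathcomp Require Import reals.
From mathcomp.real_closed Require Import complex.
From mathcomp Require Import ring.
Import GRing.Theory.
Local Open Scope ring_scope.

Lemma thm_general (K : fieldType) : thm11_over K.
Proof.
move=> X phi f [phiDl phiDr] [z0 hz0] hf.
have key : forall x y z, phi x y * (f z - 1) = phi y z * (f x - 1).
  move=> x y z.
  have e : f (x + y + z) = f (x + (y + z)) by rewrite addrA.
  rewrite hf (hf x y) hf (hf y z) phiDl phiDr in e.
  apply/eqP; rewrite -subr_eq0; apply/eqP.
  transitivity ((f x * (f y * f z - phi y z) - (phi x y + phi x z)) -
     ((f x * f y - phi x y) * f z - (phi x z + phi y z))); first by ring.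
  by rewrite -e subrr.
have gz0 : f z0 - 1 != 0.
  apply/negP => /eqP g0.
  have gall : forall x, f x - 1 = 0.
    move=> x; have := key x z0 z0; rewrite g0 mulr0 => /esym/eqP.
    by rewrite mulf_eq0 (negbTE hz0) /= => /eqP.
  move: hz0; have := hf z0 z0.
  have e1 : forall x, f x = 1 by move=> x; apply/eqP; rewrite -subr_eq0 gall.
  rewrite !e1 mulr1 => h.
  have : phi z0 z0 = 1 - (1 - phi z0 z0) by ring.
  by rewrite -h subrr => ->; rewrite eqxx.
have main : forall x y, phi x y * phi z0 z0 = phi x z0 * phi y z0.
  move=> x y.
  have e1 := key x z0 z0.
  have e2 := key x y z0.
  apply: (mulIf gz0).
  transitivity (phi z0 z0 * (phi x y * (f z0 - 1))); first by ring.
  rewrite e2.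
  transitivity (phi y z0 * (phi z0 z0 * (f x - 1))); first by ring.
  rewrite -e1; ring.
exists (fun x => phi x z0); split; first by move=> x y; rewrite phiDl.
split.
  move=> z; split.
    move=> h; apply/negP => /eqP hF; move: (main z z); rewrite hF mul0r.
    by move/eqP; rewrite mulf_eq0 (negbTE h) (negbTE hz0).
  move=> h; apply/negP => /eqP hF; move: (main z z); rewrite hF mul0r.
  by move/esym/eqP; rewrite mulf_eq0 (negbTE h).
move=> x y hx hy; apply/negP => /eqP hxy; move: (main x y); rewrite hxy mul0r.
have hFx : phi x z0 != 0.
  apply/negP => /eqP hF; move: (main x x); rewrite hF mul0r.
  by move/eqP; rewrite mulf_eq0 (negbTE hx) (negbTE hz0).
have hFy : phi y z0 != 0.
  apply/negP => /eqP hF; move: (main y y); rewrite hF mul0r.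
  by move/eqP; rewrite mulf_eq0 (negbTE hy) (negbTE hz0).
by move/esym/eqP; rewrite mulf_eq0 (negbTE hFx) (negbTE hFy).
Qed.

Theorem mainTheorem11 (R : realType) : thm11_over R /\ thm11_over R[i].
Proof. split; exact: thm_general. Qed.
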